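(* Let $n>8$ and let $M_n$ be the maximum of $av_1(T)$ over all trees $T$ with $n$ vertices. Then $M_n=\frac n2+\delta_n$ with $0<\delta_n<\frac12$. Moreover, $\lim_{n\to\infty}\big(M_n-\frac{n+1}{2}\big)=0$, as witnessed by the trees $R_n$ obtained from the star $S_{n-1}$ by attaching a new vertex to one of its leaves, which satisfy $\frac n2<av_1(R_n)<\frac{n+1}2$ and $av_1(R_n)-\frac{n+1}{2}\to 0$.
   Context: For a graph $G=(V,E)$, a set $S\subseteq V$ is a $1$-nearly independent vertex set if the subgraph induced by $S$ has exactly one edge. $\sigma_1(G)$ is the number of such sets, $S_1(G)$ the sum of their sizes, and $av_1(G)=S_1(G)/\sigma_1(G)$. $S_m$ denotes the star on $m$ vertices. *)

(* Defs.v *)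
From mathcomp Require Import all_boot all_order all_algebra.
Set Implicit Arguments. Unset Strict Implicit. Unset Printing Implicit Defensive.
Import Order.TTheory GRing.Theory Num.Theory.

(* A simple graph on vertex set 'I_n is given by its edge set E, a set of
   2-element subsets of 'I_n. *)
Definition adj n (E : {set {set 'I_n}}) : rel 'I_n := fun x y => [set x; y] \in E.

Definition is_tree n (E : {set {set 'I_n}}) : bool :=
  [&& [forall e in E, #|e| == 2], #|E| == n.-1 &
      [forall x, forall y, connect (adj E) x y]].

Definition n_ind_edges n (E : {set {set 'I_n}}) (S : {set 'I_n}) : nat :=
  #|[set e in E | e \subset S]|.

Definition sigma1 n (E : {set {set 'I_n}}) : nat :=
  #|[set S : {set 'I_n} | n_ind_edges E S == 1%N]|.

Definition S1 n (E : {set {set 'I_n}}) : nat :=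
  \sum_(S : {set 'I_n} | n_ind_edges E S == 1%N) #|S|.

Definition av1 n (E : {set {set 'I_n}}) : rat := (S1 E)%:R / (sigma1 E)%:R.

(* M_n: maximum of av_1 over all trees on n vertices (av_1 >= 0 so 0 is a
   harmless neutral element; trees exist for n >= 1). *)
Definition Mn (n : nat) : rat :=
  \big[Num.max/0%R]_(E : {set {set 'I_n}} | is_tree E) av1 E.

(* R_n: star S_{n-1} with centre 0 and leaves 1..n-2, plus vertex n-1
   attached to the leaf 1. *)
Definition Rn (n : nat) : {set {set 'I_n}} :=
  [set e : {set 'I_n} | [exists i : 'I_n, [exists j : 'I_n,
     (e == [set i; j]) &&
     (((nat_of_ord i == 0%N) && (1 <= j <= n - 2)%N)
      || ((nat_of_ord i == 1%N) && (nat_of_ord j == n - 1)%N))]]].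

(* Main.v *)
Require Import Defs.
From mathcomp Require Import all_boot all_order all_algebra zify lra ring.
Set Implicit Arguments. Unset Strict Implicit. Unset Printing Implicit Defensive.
Import Order.TTheory GRing.Theory Num.Theory.

Section Gen.
Variable n : nat.
Implicit Types (S T : {set 'I_n}) (E : {set {set 'I_n}}) (w : 'I_n).

Definition tog w S := if w \in S then S :\ w else w |: S.

Lemma setU1_idem w S : w \in S -> w |: S = S.
Proof. by move=> wS; apply/setP=> x; rewrite !inE; case: eqP => // ->. Qed.

Lemma setD1_notin w S : w \notin S -> S :\ w = S.
Proof. by move=> wS; apply/setP=> x; rewrite !inE; case: eqP => // ->; rewrite (negbTE wS). Qed.

Lemma togK w : involutive (tog w).
Proof.
move=> S; rewrite /tog; case: (boolP (w \in S)) => wS.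
  by rewrite in_setD1 eqxx /= setD1K.
by rewrite setU11 setU1K.
Qed.

Lemma mem_tog w S : (w \in tog w S) = (w \notin S).
Proof. by rewrite /tog; case: ifP => wS; rewrite !inE eqxx. Qed.

Lemma tog_D1 w S : tog w S :\ w = S :\ w.
Proof.
rewrite /tog; case: ifP => wS; apply/setP=> x; rewrite !inE;
  by case: eqP.
Qed.

Lemma tog_U1 w S : w |: tog w S = w |: S.
Proof.
rewrite /tog; case: ifP => wS; apply/setP=> x; rewrite !inE;
  by case: eqP => // ->.
Qed.

Lemma card_sum (T : finType) (Q : pred T) : #|[set x | Q x]| = \sum_x (Q x : nat).
Proof.
rewrite -sum1_card big_mkcond /=; apply: eq_bigr => x _; rewrite inE.
by case: (Q x).
Qed.

Lemma half (P : {set {set 'I_n}}) w :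
  (forall S, (tog w S \in P) = (S \in P)) ->
  (#|[set S in P | w \in S]|).*2 = #|P|.
Proof.
move=> HP.
set P1 := [set S in P | w \in S].
have e0 : tog w @: P1 = P :\: P1.
  rewrite (can2_imset_pre _ (togK w) (togK w)).
  apply/setP=> S; rewrite !inE HP mem_tog.
  by case: (S \in P); case: (w \in S).
rewrite -(cardsID P1 P) -addnn; congr (_ + _).
  by apply: eq_card => S; rewrite !inE; case: (S \in P).
rewrite -e0 card_imset //; exact: can_inj (togK w).
Qed.

End Gen.
Section Gen2.
Variable n : nat.
Implicit Types (S T : {set 'I_n}) (E : {set {set 'I_n}}) (w : 'I_n).

Definition Fset E := [set S | n_ind_edges E S == 1%N].

Lemma uniq_edge E S : S \in Fset E ->
  exists e, [/\ e \in E, e \subset S & forall e', e' \in E -> e' \subset S -> e' = e].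
Proof.
rewrite inE /n_ind_edges => /cards1P [e He].
have : e \in [set e in E | e \subset S] by rewrite He set11.
rewrite inE => /andP [eE eS]; exists e; split => // e' e'E e'S.
have : e' \in [set e in E | e \subset S] by rewrite inE e'E.
by rewrite He inE => /eqP.
Qed.

Lemma F_intro E S e : e \in E -> e \subset S ->
  (forall e', e' \in E -> e' \subset S -> e' = e) -> S \in Fset E.
Proof.
move=> eE eS Hu; rewrite inE /n_ind_edges; apply/cards1P; exists e.
apply/setP=> e'; rewrite !inE; apply/andP/eqP.
  by case=> ??; apply: Hu.
by move=> ->; rewrite eE.
Qed.

Lemma notF2 E S e1 e2 : e1 \in E -> e2 \in E -> e1 \subset S -> e2 \subset S ->
  e1 != e2 -> S \notin Fset E.
Proof.
move=> ?? ?? ne; apply/negP => /uniq_edge [e [_ _ Hu]].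
by rewrite (Hu e1) // (Hu e2) // eqxx in ne.
Qed.

End Gen2.

Lemma mem_tog_other n (x w : 'I_n) S : x != w -> (x \in tog w S) = (x \in S).
Proof. by move=> xw; rewrite /tog; case: ifP => _; rewrite !inE (negbTE xw). Qed.

Lemma tog_sub n (e S : {set 'I_n}) w : w \notin e -> (e \subset tog w S) = (e \subset S).
Proof.
move=> we; apply/subsetP/subsetP => H x xe; have xw : x != w.
- by apply: contraNneq we => <-.
- by rewrite -(mem_tog_other S xw); apply: H.
- by apply/contraNneq: we => <-.
by rewrite (mem_tog_other S xw); apply: H.
Qed.

Section Tree.
Variable n : nat.
Variable E : {set {set 'I_n}}.
Hypothesis HT : is_tree E.
Hypothesis Hn : (3 < n)%N.
Implicit Types (S C : {set 'I_n}) (w : 'I_n).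

Lemma tree_card2 e : e \in E -> #|e| = 2.
Proof. by case/and3P: HT => /forall_inP H _ _ /H /eqP. Qed.

Lemma tree_conn x y : connect (adj E) x y.
Proof. by case/and3P: HT => _ _ /forallP /(_ x) /forallP. Qed.

Lemma adj_sym : symmetric (adj E).
Proof. by move=> x y; rewrite /adj setUC. Qed.

Lemma exit_lemma C a : a \in C -> (#|C| < n)%N ->
  exists c y, [/\ c \in C, y \notin C & adj E c y].
Proof.
move=> aC Cn.
case: (boolP [exists c, exists y, [&& c \in C, y \notin C & adj E c y]]).
  by case/existsP => c /existsP [y /and3P [*]]; exists c, y.
move=> Hn'.
have cl : closed (adj E) (mem C).
  apply: intro_closed; first exact: sym_connect_sym adj_sym.
  move=> x y xy xC; apply/negPn/negP => yC.
  by move/negP: Hn'; apply; apply/existsP; exists x; apply/existsP; exists y; rewrite xC yC.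
have allC : forall z, z \in C.
  by move=> z; rewrite -(closed_connect cl (tree_conn a z)).
have : #|C| = n.
  by rewrite -[RHS]card_ord; apply: eq_card => z; rewrite allC.
by move=> Ce; rewrite Ce ltnn in Cn.
Qed.

Definition Nb (e : {set 'I_n}) := [set y | (y \in e) || [exists z in e, adj E z y]].

Lemma sub_Nb (e : {set 'I_n}) : e \subset Nb e.
Proof. by apply/subsetP => y ye; rewrite inE ye. Qed.

Lemma Nb3 (e : {set 'I_n}) : e \in E -> (3 <= #|Nb e|)%N.
Proof.
move=> eE; have c2 := tree_card2 eE.
have [u ue] : exists u, u \in e.
  by apply/set0Pn; rewrite -card_gt0 c2.
have Cn : (#|e| < n)%N by rewrite c2 (ltn_trans _ Hn).
have [c [y [ce ye cy]]] := exit_lemma ue Cn.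
have sub : y |: e \subset Nb e.
  apply/subsetP=> x; rewrite !inE => /orP [/eqP -> | xe].
    by apply/orP; right; apply/existsP; exists c; rewrite ce.
  by rewrite xe.
by apply: leq_trans (subset_leq_card sub); rewrite cardsU1 ye c2.
Qed.

Lemma Nb4 : exists2 e0, e0 \in E & (4 <= #|Nb e0|)%N.
Proof.
have [e eE] : exists e, e \in E.
  apply/set0Pn; rewrite -card_gt0; case/and3P: HT => _ /eqP -> _.
  by rewrite -ltnS prednK ?(ltn_trans _ Hn) //; apply: ltn_trans Hn.
case: (leqP 4 #|Nb e|) => [H4|H3]; first by exists e.
have c2 := tree_card2 eE.
case/cards2P: (introT eqP c2) => u [v [uv ed]].
have uC : u \in Nb e by rewrite inE ed !inE eqxx.
have [c [y [cC yC cy]]] := exit_lemma uC (leq_trans H3 Hn).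
have ce : c \notin e.
  apply/negP => ce; move/negP: yC; apply; rewrite inE; apply/orP; right.
  by apply/existsP; exists c; rewrite ce.
have [z [ze zc]] : exists z, z \in e /\ adj E z c.
  move: cC; rewrite inE (negbTE ce) /= => /existsP [z /andP [??]]; by exists z.
have zce : [set z; c] \in E by [].
exists [set z; c] => //.
have sub : y |: (c |: e) \subset Nb [set z; c].
  apply/subsetP=> x; rewrite !inE => /orP [/eqP -> | /orP [/eqP -> | xe]].
  - by apply/orP; right; apply/existsP; exists c; rewrite !inE eqxx orbT.
  - by rewrite eqxx orbT.
  - move: ze xe; rewrite ed !inE => /orP [] /eqP -> /orP [] /eqP ->; rewrite ?eqxx //=;
    apply/orP; right; apply/existsP.
    + by exists u; rewrite !inE eqxx /= /adj -ed.
    + by exists v; rewrite !inE eqxx /= /adj setUC -ed.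
apply: leq_trans (subset_leq_card sub).
rewrite cardsU1 cardsU1 c2 ce.
suff -> : y \notin c |: e by [].
rewrite !inE negb_or; apply/andP; split.
  by apply/negP => /eqP yc; rewrite yc cC in yC.
by apply/negP => ye; move/negP: yC; apply; rewrite inE ye.
Qed.


Definition free w S := (S :\ w \in Fset E) && (w |: S \in Fset E).

Lemma free_tog w S : free w (tog w S) = free w S.
Proof. by rewrite /free tog_D1 tog_U1. Qed.

Lemma free_F w S : free w S -> S \in Fset E.
Proof.
case/andP => H1 H2; case: (boolP (w \in S)) => wS.
  by rewrite -(setU1_idem wS).
by rewrite -(setD1_notin wS).
Qed.

Lemma card_S S : S \in Fset E -> (#|S| <= 2 + #|[set w in S | free w S]|)%N.
Proof.
move=> SF; have [e [eE eS Hu]] := uniq_edge SF.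
have sub : [set w in S | ~~ free w S] \subset e.
  apply/subsetP => w; rewrite inE => /andP [wS].
  apply: contraNT => we; rewrite /free (setU1_idem wS) SF andbT.
  apply: (F_intro eE); first by rewrite subsetD1 eS we.
  move=> e' e'E e'S; apply: Hu => //; apply: subset_trans e'S _; exact: subD1set.
rewrite -(cardsID [set w | free w S] S) addnC; apply: leq_add.
  rewrite -(tree_card2 eE); apply: leq_trans (subset_leq_card sub).
  by apply: eq_leq; apply: eq_card => w; rewrite !inE // andbC.
by apply: eq_leq; apply: eq_card => w; rewrite !inE // andbC.
Qed.

Lemma free_bound S e : S \in Fset E -> e \in E -> e \subset S ->
  (#|[set w | free w S]| + #|Nb e| <= n)%N.
Proof.
move=> SF eE eS.
have [e1 [_ _ Hu1]] := uniq_edge SF.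
have Hu : forall e', e' \in E -> e' \subset S -> e' = e.
  by move=> e' ??; rewrite (Hu1 e') // (Hu1 e).
have sub : [set w | free w S] \subset ~: Nb e.
  apply/subsetP => y; rewrite !inE => fy; apply/negP => /orP [ye | /existsP [z /andP [ze zy]]].
    case/andP: fy => /uniq_edge [e' [e'E]]; rewrite subsetD1 => /andP [e'S ye'] _ _.
    by rewrite (Hu e') // ye in ye'.
  case: (boolP (y \in e)) => ye.
    case/andP: fy => /uniq_edge [e' [e'E]]; rewrite subsetD1 => /andP [e'S ye'] _ _.
    by rewrite (Hu e') // ye in ye'.
  case/andP: fy => _; apply/negP; apply: (notF2 eE zy).
  - by apply: subset_trans eS _; apply/subsetP => x xS; rewrite inE xS orbT.
  - apply/subsetP => x; rewrite !inE => /orP [/eqP -> | /eqP ->]; last by rewrite eqxx.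
    by rewrite (subsetP eS) ?orbT.
  - by apply/negP => /eqP ee; move: ye; rewrite ee !inE eqxx orbT.
have := subset_leq_card sub; rewrite -(leq_add2r #|Nb e|) => H.
apply: (leq_trans H); rewrite addnC cardsC card_ord //.
Qed.

Lemma exch (Q : 'I_n -> {set 'I_n} -> bool) :
  \sum_(S : {set 'I_n}) #|[set w | Q w S]| = \sum_(w : 'I_n) #|[set S | Q w S]|.
Proof.
rewrite (eq_bigr (fun S => \sum_w (Q w S : nat))); last by move=> S _; rewrite card_sum.
rewrite exchange_big; apply: eq_bigr => w _; by rewrite card_sum.
Qed.

Lemma tree_bound : ((S1 E).*2 + 1 <= n.+1 * sigma1 E)%N.
Proof.
set F := Fset E.
have eS1 : S1 E = \sum_(S in F) #|S| by apply: eq_bigl => S; rewrite inE.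
have esig : sigma1 E = #|F| by [].
have stepC : (\sum_(S in F) #|S| <= 2 * #|F| + \sum_(S in F) #|[set w in S | free w S]|)%N.
  rewrite -sum1_card big_distrr /= -big_split /=; apply: leq_sum => S SF.
  by rewrite muln1; apply: card_S.
have stepD : \sum_(S in F) #|[set w in S | free w S]| =
    \sum_(w : 'I_n) #|[set S : {set 'I_n} | (w \in S) && free w S]|.
  rewrite -exch [RHS](bigID (mem F)) /= [X in _ = _ + X]big1 ?addn0.
    by apply: eq_bigr => S _; apply: eq_card => w; rewrite !inE.
  move=> S SF; apply/eqP; rewrite cards_eq0; apply/eqP/setP => w; rewrite !inE.
  by apply/negP => /andP [_ /free_F]; apply/negP.
have stepE : 2 * (\sum_(w : 'I_n) #|[set S : {set 'I_n} | (w \in S) && free w S]|) =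
    \sum_(w : 'I_n) #|[set S : {set 'I_n} | free w S]|.
  rewrite big_distrr /=; apply: eq_bigr => w _; rewrite mul2n.
  rewrite -(@half _ [set S | free w S] w); last by move=> S; rewrite !inE free_tog.
  by congr (_.*2); apply: eq_card => S; rewrite !inE andbC.
have stepF : \sum_(w : 'I_n) #|[set S : {set 'I_n} | free w S]| = \sum_(S in F) #|[set w | free w S]|.
  rewrite -(exch (fun w S => free w S)) (bigID (mem F)) /= [X in _ + X = _]big1 ?addn0 //.
  move=> S SF; apply/eqP; rewrite cards_eq0; apply/eqP/setP => w; rewrite !inE.
  by apply/negP => /free_F; apply/negP.
have [e0 e0E e04] := Nb4.
have e0F : e0 \in F.
  apply: (F_intro e0E) => // e' e'E e'S; apply/eqP; rewrite eqEcard e'S.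
  by rewrite (tree_card2 e0E) (tree_card2 e'E).
have stepG : (\sum_(S in F) #|[set w | free w S]| + 1 <= (n - 3) * #|F|)%N.
  rewrite -sum1_card big_distrr /= (bigD1 e0) //= [X in (_ <= X)%N](bigD1 e0) //= muln1.
  rewrite addnAC; apply: leq_add.
    rewrite -(leq_add2r 3) subnK ?(ltnW Hn) //.
    apply: leq_trans (free_bound e0F e0E (subxx e0)).
    by rewrite -addnA leq_add2l.
  apply: leq_sum => S SF'; rewrite ?muln1.
  have SF : S \in F by case/andP: SF'.
  have [e [eE eS _]] := uniq_edge SF.
  rewrite -(leq_add2r 3) subnK ?(ltnW Hn) //.
  apply: leq_trans (free_bound SF eE eS).
  by rewrite leq_add2l Nb3.
rewrite eS1 esig.
rewrite stepD in stepC; rewrite -stepE in stepF.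
have eq1 : n.+1 * #|F| = 4 * #|F| + (n - 3) * #|F|.
  by rewrite -mulnDl; congr (_ * _); lia.
rewrite eq1 -addnn; lia.
Qed.

End Tree.

Section Rsec.
Variable m : nat.
Hypothesis Hm : (7 < m)%N.
Local Notation n := m.+1.
Local Notation E := (Rn m.+1).
Local Notation F := (Fset (Rn m.+1)).
Definition o0 : 'I_n := ord0.
Definition oL : 'I_n := ord_max.
Definition o1 : 'I_n := inord 1.
Definition L : {set 'I_n} := ~: [set o0; oL].

Lemma val_o1 : nat_of_ord o1 = 1%N.
Proof. by rewrite /o1 inordK // ltnS (leq_trans _ Hm). Qed.

Lemma o0L : o0 != oL.
Proof. by apply/eqP => /(congr1 (@nat_of_ord _)) /= H; move: Hm; rewrite -H. Qed.
Lemma o01 : o0 != o1.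
Proof. by apply/eqP => /(congr1 (@nat_of_ord _)); rewrite val_o1. Qed.
Lemma o1L : o1 != oL.
Proof. by apply/eqP => /(congr1 (@nat_of_ord _)); rewrite val_o1 /= => H; move: Hm; rewrite -H. Qed.
Lemma o1_L : o1 \in L.
Proof. by rewrite !inE negb_or eq_sym o01 o1L. Qed.

Lemma mem_Rn e : e \in E <-> (exists2 j, j \in L & e = [set o0; j]) \/ e = [set o1; oL].
Proof.
rewrite /Rn inE; split.
  case/existsP => i /existsP [j /andP [/eqP -> /orP [/andP [i0 j12] | /andP [i1 jL]]]].
    left; exists j; last by congr [set _; _]; apply: ord_inj; rewrite /= (eqP i0).
    rewrite !inE negb_or; case/andP: j12 => j1 j2; apply/andP; split.
      by apply/eqP => /(congr1 (@nat_of_ord _)) /= H; rewrite H in j1.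
    apply/eqP => /(congr1 (@nat_of_ord _)) /= H; rewrite H in j2; move: j2; rewrite subn2 /=.
    by case: m Hm => [|k] //; rewrite ltnn.
  right; congr [set _; _]; apply: ord_inj; rewrite /=; rewrite ?val_o1 ?(eqP i1) //.
  by rewrite (eqP jL) subn1.
case=> [[j jL ->] | ->].
  apply/existsP; exists o0; apply/existsP; exists j; rewrite eqxx /=.
  move: jL; rewrite !inE negb_or => /andP [j0 jL].
  apply/orP; left; apply/andP; split.
    by rewrite lt0n; apply: contra j0 => /eqP H; apply/eqP/ord_inj.
  have jm : nat_of_ord j != m by apply: contra jL => /eqP H; apply/eqP/ord_inj.
  have := ltn_ord j; move: jm; clear; lia.
apply/existsP; exists o1; apply/existsP; exists oL; rewrite eqxx /= val_o1 /=.
by rewrite subn1.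
Qed.

Lemma R1 e : e \in E -> (o0 \in e) \/ e = [set o1; oL].
Proof. by move/mem_Rn; case=> [[j _ ->] | ->]; [left; rewrite !inE eqxx | right]. Qed.

Lemma R2 e : e \in E -> oL \in e -> e = [set o1; oL].
Proof.
move/mem_Rn; case=> [[j jL ->] | -> //].
rewrite !inE => /orP [/eqP H | /eqP H]; first by move: o0L; rewrite H eqxx.
by move: jL; rewrite -H !inE eqxx orbT.
Qed.

Lemma R3 j : j \in L -> [set o0; j] \in E.
Proof. by move=> jL; apply (proj2 (mem_Rn _)); left; exists j. Qed.
Lemma R3' : [set o1; oL] \in E.
Proof. by apply (proj2 (mem_Rn _)); right. Qed.

Lemma R_card2 e : e \in E -> #|e| = 2.
Proof.
move/mem_Rn; case=> [[j jL ->] | ->]; rewrite cards2.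
  by move: jL; rewrite !inE negb_or => /andP [/negbTE]; rewrite eq_sym => ->.
by rewrite o1L.
Qed.

Lemma card_L : #|L| = m.-1.
Proof.
have := cardsC [set o0; oL]; rewrite cards2 o0L card_ord -/L.
by move=> H; apply/eqP; rewrite -(eqn_add2l 2) H add2n; case: m Hm.
Qed.

Lemma R_eq : E = [set o1; oL] |: ((fun j => [set o0; j]) @: L).
Proof.
apply/setP => e; apply/idP/idP.
  move/mem_Rn; case=> [[j jL ->] | ->]; last by apply/setU1P; left.
  by apply/setU1P; right; apply: imset_f.
case/setU1P => [-> | /imsetP [j jL ->]]; [exact: R3' | exact: R3].
Qed.

Lemma R_card : #|E| = m.
Proof.
rewrite R_eq cardsU1 card_in_imset ?card_L.
  have -> : [set o1; oL] \notin [set [set o0; j] | j in L].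
    apply/imsetP => [[j _ H]]; have : o0 \in [set o1; oL] by rewrite H !inE eqxx.
    by rewrite !inE (negbTE o01) (negbTE o0L).
  by case: m Hm.
move=> j k jL kL H; have : j \in [set o0; k] by rewrite -H !inE eqxx orbT.
rewrite !inE => /orP [/eqP jo | /eqP //]; by move: jL; rewrite jo !inE eqxx.
Qed.

Lemma R_tree : is_tree E.
Proof.
apply/and3P; split.
- by apply/forall_inP => e /R_card2 ->.
- by rewrite R_card.
have sym : symmetric (adj E) by move=> x y; rewrite /adj setUC.
have to0 : forall x, connect (adj E) x o0.
  move=> x; case: (boolP (x \in L)) => xL.
    by apply: connect1; rewrite /adj setUC; apply: R3.
  move: xL; rewrite !inE negbK => /orP [/eqP -> // | /eqP ->].
  have h1 : adj E oL o1 by rewrite /adj setUC; exact: R3'.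
  have h2 : adj E o1 o0 by rewrite /adj setUC; apply: R3; exact: o1_L.
  exact: connect_trans (connect1 h1) (connect1 h2).
apply/forallP => x; apply/forallP => y.
apply: connect_trans (to0 x) _; rewrite (sym_connect_sym sym); exact: to0.
Qed.

Definition A : {set {set 'I_n}} := [set S : {set 'I_n} | [&& o1 \in S, oL \in S & o0 \notin S]].
Definition B : {set {set 'I_n}} := [set S in F | o0 \in S].

Lemma A_F S : S \in A -> S \in F.
Proof.
rewrite inE => /and3P [S1 SL S0].
apply: (F_intro R3').
  by apply/subsetP => x; rewrite !inE => /orP [] /eqP ->.
move=> e' /R1 [| //] e0 e'S; by rewrite (subsetP e'S _ e0) in S0.
Qed.

Lemma F_A S : S \in F -> o0 \notin S -> S \in A.
Proof.
move=> SF S0; have [e [eE eS _]] := uniq_edge SF.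
case: (R1 eE) => [e0 | ee]; first by rewrite (subsetP eS _ e0) in S0.
by rewrite inE S0 andbT !(subsetP eS) // ee !inE eqxx ?orbT.
Qed.

Lemma S1_split : S1 E = \sum_(S in B) #|S| + \sum_(S in A) #|S|.
Proof.
rewrite /S1 (bigID (fun S : {set 'I_n} => o0 \in S)) /=; congr (_ + _); apply: eq_bigl => S.
  by rewrite !inE.
apply/idP/idP.
  by case/andP => H1 H2; apply: F_A => //; rewrite inE.
move=> SA; have := A_F SA; rewrite inE => -> /=; move: SA; rewrite inE; by case/and3P.
Qed.

Lemma sig_split : sigma1 E = #|B| + #|A|.
Proof.
rewrite /sigma1 -(cardsID [set S : {set 'I_n} | o0 \in S]); congr (_ + _); apply: eq_card => S.
  by rewrite !inE.
rewrite !inE; apply/idP/idP.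
  case/andP => H1 H2; move: (F_A (S := S)); rewrite inE => /(_ H2 H1); by rewrite inE.
move=> SA; have SA' : S \in A by rewrite inE.
move: (A_F SA'); rewrite inE => ->; rewrite andbT; by case/and3P: SA.
Qed.


Definition Rest : {set 'I_n} := ~: (o0 |: [set o1; oL]).

Lemma card_Rest : #|Rest| = (m - 2)%N.
Proof.
have := cardsC (o0 |: [set o1; oL]); rewrite cardsU1 cards2 o1L !inE (negbTE o01) (negbTE o0L) /=.
rewrite card_ord -/Rest; move: (#|Rest|) => k H; move: Hm H; clear; lia.
Qed.

Lemma notRest x : x \in Rest = [&& x != o0, x != o1 & x != oL].
Proof. by rewrite !inE !negb_or. Qed.

Lemma card_A : (2 ^ (m - 2) <= #|A|)%N.
Proof.
pose f (T : {set 'I_n}) := T :|: [set o1; oL].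
have key : forall T : {set 'I_n}, T \subset Rest -> f T :&: Rest = T.
  move=> T TR; apply/setP => x; rewrite !inE.
  case xT: (x \in T) => /=.
    by have := subsetP TR x xT; rewrite !inE.
  by case: (x == o1); case: (x == oL); rewrite ?orbT /= ?andbF ?andbT //.
rewrite -card_Rest -card_powerset -(card_in_imset (f := f)).
  apply: subset_leq_card; apply/subsetP => S /imsetP [T]; rewrite powersetE => TR ->.
  rewrite inE !inE !eqxx ?orbT /= (negbTE o01) (negbTE o0L) !orbF.
  by apply/negP => /(subsetP TR); rewrite !inE eqxx.
move=> T1 T2; rewrite !powersetE => T1R T2R H.
by rewrite -(key _ T1R) -(key _ T2R) H.
Qed.

Lemma sum_card_exch (P : {set {set 'I_n}}) :
  \sum_(S in P) #|S| = \sum_(w : 'I_n) #|[set S in P | w \in S]|.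
Proof.
rewrite (eq_bigr (fun S : {set 'I_n} => \sum_(w : 'I_n) (w \in S : nat))); last first.
  by move=> S _; rewrite -sum1_card big_mkcond.
rewrite exchange_big; apply: eq_bigr => w _.
by rewrite -sum1_card [RHS]big_mkcond [LHS]big_mkcond; apply: eq_bigr => S _; rewrite !inE; case: (S \in P); case: (w \in S).
Qed.

Lemma sum_A : ((m + 2) * #|A| <= 2 * \sum_(S in A) #|S|)%N.
Proof.
rewrite sum_card_exch big_distrr /= (bigID (mem Rest)) /=.
have e1 : \sum_(i in Rest) 2 * #|[set S in A | i \in S]| = (m - 2) * #|A|.
  rewrite -card_Rest -sum_nat_const; apply: eq_bigr => w wR.
  rewrite mul2n; apply: half => S; rewrite !inE !mem_tog_other //; move: wR; rewrite notRest;
  case/and3P => *; by rewrite eq_sym.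
have eA : forall w, w \in [set o1; oL] -> #|[set S in A | w \in S]| = #|A|.
  move=> w wK; apply: eq_card => S; rewrite !inE; apply/andP/idP => [[] // | SA]; split => //.
  by move: SA wK; rewrite !inE => /and3P [? ? _] /orP [] /eqP ->.
rewrite e1 (bigD1 o1) /=; last by rewrite notRest eqxx andbF.
rewrite (bigD1 oL) /=; last by rewrite notRest eqxx !andbF /= eq_sym o1L.
rewrite !eA ?inE ?eqxx ?orbT //.
have : ((m + 2) * #|A| = (m - 2) * #|A| + (2 * #|A| + 2 * #|A|))%N.
  rewrite -!mulnDl; congr (_ * _); move: Hm; clear; lia.
move=> ->; rewrite leq_add2l addnA leq_addr //.
Qed.


Lemma inL x : (x \in L) = (x != o0) && (x != oL).
Proof. by rewrite !inE negb_or. Qed.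

Lemma struct_B (S : {set 'I_n}) : S \in F -> o0 \in S ->
  exists2 j, j \in L & (S = [set o0; j] \/ S = oL |: [set o0; j]).
Proof.
move=> SF S0; have [e [eE eS Hu]] := uniq_edge SF.
have [j jL jS] : exists2 j, j \in L & j \in S.
  move/mem_Rn: eE => [[j jL ej] | ej].
    by exists j => //; apply: (subsetP eS); rewrite ej !inE eqxx orbT.
  by exists o1; [exact: o1_L | apply: (subsetP eS); rewrite ej !inE eqxx].
have ejE := R3 jL.
have ejS : [set o0; j] \subset S by apply/subsetP => x; rewrite !inE => /orP [] /eqP ->.
have He := Hu _ ejE ejS.
have sub : S \subset oL |: [set o0; j].
  apply/subsetP => x xS; rewrite !inE.
  case: (boolP (x \in L)) => xL.
    have := Hu _ (R3 xL); rewrite -He => H.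
    have : x \in [set o0; j].
      rewrite -H ?inE ?eqxx ?orbT //.
      by apply/subsetP => y; rewrite !inE => /orP [] /eqP ->.
    by rewrite !inE => ->; rewrite orbT.
  by move: xL; rewrite inL negb_and !negbK => /orP [] ->; rewrite ?orbT.
exists j => //; case: (boolP (oL \in S)) => SL; [right | left]; apply/eqP; rewrite eqEsubset.
  rewrite sub /=; apply/subsetP => x; rewrite !inE => /orP [/eqP -> // | /orP []] /eqP -> //.
apply/andP; split => //; apply/subsetP => x xS; move: (subsetP sub x xS); rewrite !inE.
by case/orP => // /eqP xL; move: xS; rewrite xL (negbTE SL).
Qed.

Lemma card_B : (#|B| <= 2 * (m - 1))%N.
Proof.
pose f1 (j : 'I_n) := [set o0; j].
pose f2 (j : 'I_n) := oL |: [set o0; j].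
have sub : B \subset (f1 @: L) :|: (f2 @: L).
  apply/subsetP => S; rewrite !inE => /andP [SF S0].
  have SF' : S \in F by rewrite inE.
  have [j jL [-> | ->]] := struct_B SF' S0.
    by apply/orP; left; apply: imset_f.
  by apply/orP; right; apply: imset_f.
apply: leq_trans (subset_leq_card sub) _; rewrite cardsU.
apply: leq_trans (leq_subr _ _) _; rewrite mul2n -addnn.
have cL : #|L| = (m - 1)%N by rewrite card_L subn1.
by apply: leq_add; rewrite -cL; apply: leq_imset_card.
Qed.


Lemma per_S_B (S : {set 'I_n}) : S \in F -> (2 + ((oL \in S) && (o1 \notin S)) <= #|S|)%N.
Proof.
move=> SF; have [e [eE eS _]] := uniq_edge SF.
have c2 := R_card2 eE.
case: (boolP ((oL \in S) && (o1 \notin S))) => [/andP [SL S1] | _].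
  have eL : oL \notin e.
    apply/negP => eL; move: (R2 eE eL) => ee; move: eS; rewrite ee => /subsetP /(_ o1).
    by rewrite !inE eqxx (negbTE S1) => /(_ isT).
  have : oL |: e \subset S by rewrite subUset sub1set SL eS.
  by move/subset_leq_card; rewrite cardsU1 eL c2.
by rewrite addn0 -c2 subset_leq_card.
Qed.

Lemma tog_F (S : {set 'I_n}) : o1 \notin S -> S \in F -> tog oL S \in F.
Proof.
move=> S1 SF; have [e [eE eS Hu]] := uniq_edge SF.
have eL : oL \notin e.
  apply/negP => eL; move: (R2 eE eL) => ee; move: eS; rewrite ee => /subsetP /(_ o1).
  by rewrite !inE eqxx (negbTE S1) => /(_ isT).
apply: (F_intro eE); first by rewrite tog_sub.
move=> e' e'E e'S; have e'L : oL \notin e'.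
  apply/negP => e'L; move: (R2 e'E e'L) => ee; move: e'S; rewrite ee => /subsetP /(_ o1).
  rewrite !inE eqxx mem_tog_other ?o1L // (negbTE S1) => /(_ isT) //.
by apply: Hu => //; rewrite -(tog_sub S e'L).
Qed.

Definition B' : {set {set 'I_n}} := [set S in B | o1 \notin S].

Lemma B'_tog (S : {set 'I_n}) : (tog oL S \in B') = (S \in B').
Proof.
have o0L' : o0 != oL := o0L.
rewrite !inE !mem_tog_other ?o1L //.
case: (boolP (o1 \in S)) => //= S1; rewrite ?andbF ?andbT //.
case: (boolP (o0 \in S)) => //= S0; rewrite ?andbF ?andbT //.
have := @tog_F S S1; have := @tog_F (tog oL S); rewrite togK mem_tog_other ?o1L //.
rewrite !inE => /(_ S1) H1 H2; apply/idP/idP; [exact: H1 | exact: H2].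
Qed.

Lemma card_B_B' : (#|B| <= #|B'| + 1)%N.
Proof.
rewrite -(cardsID [set S : {set 'I_n} | o1 \in S] B) addnC; apply: leq_add.
  by apply: eq_leq; apply: eq_card => S; rewrite !inE andbC.
have sub : B :&: [set S : {set 'I_n} | o1 \in S] \subset [set [set o0; o1]].
  apply/subsetP => S; rewrite !inE => /andP [/andP [SF S0] S1].
  have SF' : S \in F by rewrite inE.
  have [j jL [eS | eS]] := struct_B SF' S0.
    have : o1 \in [set o0; j] by rewrite -eS.
    by rewrite !inE eq_sym (negbTE o01) /= => /eqP jo; rewrite eS -jo.
  have : o1 \in oL |: [set o0; j] by rewrite -eS.
  rewrite !inE (negbTE o1L) eq_sym (negbTE o01) /= => /eqP jo.
  suff : S \notin F by rewrite SF'.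
  apply: (@notF2 _ E S [set o0; o1] [set o1; oL] (R3 o1_L) R3').
  - by rewrite eS -jo; apply/subsetP => x; rewrite !inE => /orP [] ->; rewrite ?orbT.
  - by rewrite eS -jo; apply/subsetP => x; rewrite !inE => /orP [] ->; rewrite ?orbT.
  - apply/negP => /eqP H; have : o0 \in [set o1; oL] by rewrite -H !inE eqxx.
    by rewrite !inE (negbTE o01) (negbTE o0L).
by rewrite -(cards1 [set o0; o1]) subset_leq_card.
Qed.


Lemma sum_B : (5 * #|B| <= 2 * \sum_(S in B) #|S| + 1)%N.
Proof.
have h1 : (\sum_(S in B) (2 + ((oL \in S) && (o1 \notin S))) <= \sum_(S in B) #|S|)%N.
  apply: leq_sum => S; rewrite inE => /andP [SF _]; exact: per_S_B.
have h2 : \sum_(S in B) (2 + ((oL \in S) && (o1 \notin S)) : nat) =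
     (2 * #|B| + #|[set S in B' | oL \in S]|)%N.
  rewrite big_split /= -sum1_card big_distrr /= muln1; congr (_ + _).
  rewrite -sum1_card [RHS]big_mkcond [LHS]big_mkcond; apply: eq_bigr => S _.
  rewrite /B' !in_set; case: (_ && _); case: (oL \in S); case: (o1 \in S) => //.
have h3 : (#|[set S in B' | oL \in S]|).*2 = #|B'| by apply: half => S; exact: B'_tog.
have h4 := card_B_B'.
rewrite h2 in h1; move: h1 h3 h4.
move: (\sum_(S in B) #|S|) (#|[set S in B' | oL \in S]|) #|B'| #|B| => a b c d.
rewrite -mul2n; lia.
Qed.

End Rsec.

Lemma pow1 k : (2 * (k + 4) * (k + 7) + 1 < 2 ^ (k + 6))%N.
Proof.
elim: k => [|k IH] //.
have -> : (2 ^ (k.+1 + 6) = 2 * 2 ^ (k + 6))%N by rewrite addSn expnS.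
move: IH; move: (2 ^ (k + 6))%N => P; nia.
Qed.

Lemma pow2 k : ((k + 14) ^ 3 <= 2 ^ (k + 12))%N.
Proof.
elim: k => [|k IH]; first by [].
have -> : (2 ^ (k.+1 + 12) = 2 * 2 ^ (k + 12))%N by rewrite addSn expnS.
have e : (2 * (k + 14) ^ 3 = (k.+1 + 14) ^ 3 + (k ^ 3 + 39 * k ^ 2 + 501 * k + 2113))%N by ring.
apply: leq_trans (leq_addr (k ^ 3 + 39 * k ^ 2 + 501 * k + 2113) _) _.
by rewrite -e leq_mul2l IH.
Qed.

Lemma Rn_facts m : (7 < m)%N ->
  [/\ (0 < sigma1 (Rn m.+1))%N, (m.+1 * sigma1 (Rn m.+1) < 2 * S1 (Rn m.+1))%N,
      (2 * S1 (Rn m.+1) + 1 <= m.+2 * sigma1 (Rn m.+1))%N,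
      (m.+2 * sigma1 (Rn m.+1) <= 2 * S1 (Rn m.+1) + 2 * m ^ 2)%N &
      (2 ^ (m - 2) <= sigma1 (Rn m.+1))%N].
Proof.
move=> Hm.
have H3 : (3 < m.+1)%N by move: Hm; clear; lia.
have tb := tree_bound (R_tree Hm) H3.
rewrite -mul2n in tb.
have sA := sum_A Hm; have sB := sum_B Hm; have cB := card_B Hm; have cA := card_A Hm.
rewrite (S1_split Hm) (sig_split Hm) in tb *.
move: tb sA sB cB cA.
move: (\sum_(S in B m) #|S|)%N (\sum_(S in A m) #|S|)%N #|B m| #|A m| => SB SA b a.
have [k ->] : exists k, m = (k + 8)%N by exists (m - 8)%N; move: Hm; clear; lia.
have p1 := pow1 k.
have -> : (k + 8 - 2 = k + 6)%N by lia.
move: (2 ^ (k + 6))%N p1 => P p1 tb sA sB cB cA.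
have h1 : ((k + 4) * b <= (k + 4) * (2 * (k + 8 - 1)))%N by rewrite leq_mul2l cB orbT.
have h2 : ((k + 5) * b <= (k + 5) * (2 * (k + 8 - 1)))%N by rewrite leq_mul2l cB orbT.
split.
- lia.
- lia.
- lia.
- lia.
- lia.
Qed.

Local Open Scope ring_scope.

Lemma lower_av m : (7 < m)%N -> (m.+1)%:R / 2 < av1 (Rn m.+1).
Proof.
move=> Hm; have [t0 H1 _ _ _] := Rn_facts Hm.
rewrite /av1 ltr_pdivlMr ?ltr0n //.
move: H1; rewrite -(ltr_nat rat) !natrM.
move: (sigma1 _) (S1 _) => t s; rewrite -!/(_%:R) => H.
lra.
Qed.


Lemma upper_av n (E : {set {set 'I_n}}) : is_tree E -> (3 < n)%N -> av1 E < (n%:R + 1) / 2.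
Proof.
move=> HT Hn; have tb := tree_bound HT Hn.
rewrite /av1; case: (posnP (sigma1 E)) => [-> | t0].
  rewrite invr0 mulr0; apply: divr_gt0 => //; apply: ltr_wpDl => //.
rewrite ltr_pdivrMr ?ltr0n //.
move: tb; rewrite -(ler_nat rat) natrD !natrM -mul2n natrM.
move: (sigma1 E) (S1 E) t0 => t s t0; rewrite -(ltr_nat rat) in t0.
rewrite -[n.+1]addn1 natrD.
lra.
Qed.

Lemma gap_av m : (13 < m)%N -> (m.+1%:R + 1) / 2 - av1 (Rn m.+1) <= 1 / m%:R.
Proof.
move=> Hm; have Hm' : (7 < m)%N by move: Hm; clear; lia.
have [t0 _ _ H3 H4] := Rn_facts Hm'.
have Hcube : (m ^ 3 <= sigma1 (Rn m.+1))%N.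
  apply: leq_trans H4; have [k ->] : exists k, m = (k + 14)%N by exists (m - 14)%N; move: Hm; clear; lia.
  by have := pow2 k; have -> : (k + 14 - 2 = k + 12)%N by lia.
have key : (m * (m.+2 * sigma1 (Rn m.+1)) <= 2 * m * S1 (Rn m.+1) + 2 * sigma1 (Rn m.+1))%N.
  apply: leq_trans (_ : m * (2 * S1 (Rn m.+1) + 2 * m ^ 2) <= _)%N.
    by rewrite leq_mul2l H3 orbT.
  have e2 : (m * (2 * m ^ 2) = 2 * m ^ 3)%N by rewrite !expnS expn0; ring.
  rewrite mulnDr e2; move: Hcube; move: (m ^ 3)%N (S1 _) (sigma1 _) => c s t; nia.
rewrite /av1.
move: key t0; move: (sigma1 _) (S1 _) => t s key t0.
have m0 : (0 < m)%N by move: Hm; clear; lia.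
rewrite -(ler_nat rat) !natrD !natrM in key.
rewrite -(ltr_nat rat) in t0; rewrite -(ltr_nat rat) in m0.
set M := m%:R in key m0 *; set T := t%:R in key t0 *; set Sr := s%:R in key *.
have eq1 : (m.+1%:R + 1) / 2 - Sr / T - 1 / M = (M * (M + 2) * T - 2 * M * Sr - 2 * T) / (2 * M * T).
  rewrite -[m.+1]addn1 natrD -/M; field.
  by rewrite !lt0r_neq0.
rewrite -subr_le0 eq1 ler_pdivrMr ?mul0r; last by rewrite !mulr_gt0.
move: key; rewrite -/M; lra.
Qed.

Lemma Mn_lt n (c : rat) : 0 < c -> (forall E : {set {set 'I_n}}, is_tree E -> av1 E < c) -> Mn n < c.
Proof.
move=> c0 H; rewrite /Mn; apply: (big_ind (fun x => x < c)) => //.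
by move=> x y xc yc; rewrite gt_max xc yc.
Qed.

Lemma Mn_ge n (E : {set {set 'I_n}}) : is_tree E -> av1 E <= Mn n.
Proof.
move=> HT; rewrite /Mn; have : E \in index_enum (finset_set_of__canonical__fintype_Finite (finset_set_of__canonical__fintype_Finite 'I_n)) by rewrite mem_index_enum.
elim: (index_enum _) => // y r IH; rewrite inE big_cons => /orP [/eqP <- | Hr].
  by rewrite HT le_max lexx.
by case: ifP => _; [rewrite le_max (IH Hr) orbT | exact: IH].
Qed.

Lemma small_eps (eps : rat) : 0 < eps -> exists K : nat, forall m : nat, (K <= m)%N -> (0 < m)%N -> 1 / m%:R < eps.
Proof.
move=> e0; exists (Num.Def.archi_bound eps^-1) => m Km m0.
have ei : 0 <= eps^-1 by rewrite invr_ge0 ltW.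
have h := archi_boundP ei.
have hm : eps^-1 < m%:R by apply: lt_le_trans h _; rewrite ler_nat.
have m0' : 0 < (m%:R : rat) by rewrite ltr0n.
rewrite ltr_pdivrMr //.
have := hm; rewrite -(ltr_pM2l e0) mulfV ?lt0r_neq0 // mul1r.
Qed.

Theorem mainTheorem13 :
  (forall n : nat, (8 < n)%N ->
     0 < Mn n - n%:R / 2 < 1 / 2) /\
  (forall eps : rat, 0 < eps -> exists N : nat, forall n : nat, (N <= n)%N ->
     `|Mn n - (n%:R + 1) / 2| < eps) /\
  (forall n : nat, (8 < n)%N ->
     is_tree (Rn n) /\ n%:R / 2 < av1 (Rn n) < (n%:R + 1) / 2) /\
  (forall eps : rat, 0 < eps -> exists N : nat, forall n : nat, (N <= n)%N ->
     `|av1 (Rn n) - (n%:R + 1) / 2| < eps).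
Proof.
have up : forall n, (3 < n)%N -> Mn n < (n%:R + 1) / 2.
  move=> n Hn; apply: Mn_lt => [|E HE]; last exact: upper_av.
  by apply: divr_gt0 => //; apply: ltr_wpDl.
split.
  case=> [|m] // Hm; have Hm' : (7 < m)%N by [].
  have h1 := lower_av Hm'; have h2 := Mn_ge (R_tree Hm').
  have H3 : (3 < m.+1)%N by move: Hm; clear; lia.
  have h3 := up m.+1 H3.
  apply/andP; split; [rewrite subr_gt0; exact: lt_le_trans h1 h2 | ]. lra.
have lim : forall eps : rat, 0 < eps -> exists N : nat, forall n : nat, (N <= n)%N ->
   Mn n < (n%:R + 1) / 2 /\ av1 (Rn n) <= Mn n /\ av1 (Rn n) < (n%:R + 1) / 2 /\
   (n%:R + 1) / 2 - av1 (Rn n) < eps.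
  move=> eps e0; have [K HK] := small_eps e0; exists (K + 15)%N => -[|m] Hm.
    by move: Hm; clear; lia.
  have Hm7 : (7 < m)%N by move: Hm; clear; lia.
  have Hm13 : (13 < m)%N by move: Hm; clear; lia.
  have H3 : (3 < m.+1)%N by move: Hm; clear; lia.
  split; first exact: up.
  split; first exact: Mn_ge (R_tree Hm7).
  split; first exact: upper_av (R_tree Hm7) H3.
  apply: le_lt_trans (gap_av Hm13) _; apply: HK; move: Hm; clear; lia.
split.
  move=> eps e0; have [N HN] := lim eps e0; exists N => n Hn.
  have [h1 [h2 [h3 h4]]] := HN n Hn.
  rewrite ltr_norml; apply/andP; split; lra.
split.
  case=> [|m] // Hm; have Hm' : (7 < m)%N by [].
  split; first exact: R_tree.
  apply/andP; split; first exact: lower_av.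
  by apply: upper_av; [exact: R_tree | move: Hm; clear; lia].
move=> eps e0; have [N HN] := lim eps e0; exists N => n Hn.
have [h1 [h2 [h3 h4]]] := HN n Hn.
rewrite ltr_norml; apply/andP; split; lra.
Qed.
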